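(* Let $G$ be a cubic graph with $fn(G)=2$, and let $(G,o)$ and $(G,o')$ be two orientations of $G$ such that every edge of $G$ is deletable in $(G,o)$ or in $(G,o')$. Then: 1. every vertex has at least one incoming and at least one outgoing edge in $(G,o')$; 2. if $uv\notin D(G,o)$, then the two edges incident with $u$ other than $uv$ are oriented one into $u$ and one out of $u$ in $(G,o')$; 3. if $uv,vw\notin D(G,o)$ (with $u\neq w$), then in $(G,o')$ these edges are oriented either as $u\to v$, $w\to v$ or as $v\to u$, $v\to w$.
   Context: An orientation is strong if for every ordered pair of distinct vertices $u,v$ there is a directed $uv$-path. An edge $e$ is deletable in an orientation $(G,o)$ if the restriction of $o$ to $E(G)\setminus\{e\}$ is a strong orientation of $G-e$. $D(G,o)$ denotes the set of edges deletable in $(G,o)$. For a $3$-edge-connected graph $G$, $fn(G)$ is the minimum number $k$ such that $G$ admits $k$ orientations with every edge deletable in at least one of them. *)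

(* Defs.v *)
(* Finite multigraphs: vertex type V, edge type E (both finite),
   and [ends e = (x, y)] gives the two endpoints of edge e (parallel edges allowed). *)
From mathcomp Require Import all_boot.
Set Implicit Arguments. Unset Strict Implicit. Unset Printing Implicit Defensive.

Section Graphs.
Variables (V E : finType) (ends : E -> V * V).

Definition joins (e : E) (a b : V) : Prop := ends e = (a, b) \/ ends e = (b, a).

Definition incident (e : E) (v : V) : bool := ((ends e).1 == v) || ((ends e).2 == v).

(* cubic: every vertex has degree 3 (a loop would count twice) *)
Definition cubic : Prop :=
  forall v : V, #|[set e | (ends e).1 == v]| + #|[set e | (ends e).2 == v]| = 3.

Definition uadj (F : {set E}) : rel V := fun x y =>
  [exists e, (e \notin F) &&
     ((((ends e).1 == x) && ((ends e).2 == y)) || (((ends e).2 == x) && ((ends e).1 == y)))].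

Definition connected_minus (F : {set E}) : Prop := forall u v : V, connect (uadj F) u v.

Definition three_edge_connected : Prop :=
  forall F : {set E}, #|F| <= 2 -> connected_minus F.

(* An orientation: o e = true orients e from (ends e).1 to (ends e).2, else reversed. *)
Definition orientation := E -> bool.

Definition arc_tail (o : orientation) (e : E) : V := if o e then (ends e).1 else (ends e).2.
Definition arc_head (o : orientation) (e : E) : V := if o e then (ends e).2 else (ends e).1.

Definition darc (o : orientation) (F : {set E}) : rel V := fun x y =>
  [exists e, (e \notin F) && (arc_tail o e == x) && (arc_head o e == y)].

Definition strong_minus (o : orientation) (F : {set E}) : bool :=
  [forall u, forall v, (u != v) ==> connect (darc o F) u v].

Definition deletable (o : orientation) (e : E) : bool := strong_minus o [set e].

Definition Dset (o : orientation) : {set E} := [set e | deletable o e].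

Definition has_cover (k : nat) : Prop :=
  exists os : 'I_k -> orientation, forall e : E, exists i : 'I_k, e \in Dset (os i).

(* fn(G) = k  (fn is defined for 3-edge-connected graphs; k is the minimum) *)
Definition fn_is (k : nat) : Prop :=
  three_edge_connected /\ has_cover k /\ (forall j, j < k -> ~ has_cover j).

End Graphs.

(* Main.v *)
Require Import Defs.
From mathcomp Require Import all_boot.
Set Implicit Arguments. Unset Strict Implicit. Unset Printing Implicit Defensive.

Section H.
Variables (V E : finType) (ends : E -> V * V).

Lemma deg_bound x (s : seq E) : cubic ends -> uniq s -> all (fun e => incident ends e x) s ->
  size s + #|[set e | ((ends e).1 == x) && ((ends e).2 == x)]| <= 3.
Proof.
move=> Hc Hu Hall; rewrite -(Hc x) -cardsUI.
have -> : [set e | ((ends e).1 == x) && ((ends e).2 == x)] =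
   [set e | (ends e).1 == x] :&: [set e | (ends e).2 == x].
  by apply/setP => e; rewrite !inE.
rewrite leq_add2r -(card_uniqP Hu); apply: subset_leq_card.
by apply/subsetP => e /(allP Hall); rewrite !inE /incident.
Qed.

Lemma deg4 x a b c d : cubic ends -> uniq [:: a; b; c; d] ->
  incident ends a x -> incident ends b x -> incident ends c x -> incident ends d x -> False.
Proof.
move=> Hc Hu ia ib ic id.
have Hall : all (fun e => incident ends e x) [:: a; b; c; d].
  by apply/allP => e; rewrite !inE => /or4P [] /eqP ->.
have := deg_bound Hc Hu Hall.
by rewrite ltnNge leq_addr.
Qed.

Lemma deg_loop x a b c : cubic ends -> uniq [:: a; b; c] ->
  (ends a).1 = x -> (ends a).2 = x -> incident ends b x -> incident ends c x -> False.
Proof.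
move=> Hc Hu h1 h2 ib ic.
have ia : incident ends a x by rewrite /incident h1 eqxx.
have Hall : all (fun e => incident ends e x) [:: a; b; c].
  by apply/allP => e; rewrite !inE => /or3P [] /eqP ->.
have := deg_bound Hc Hu Hall.
have : #|[set a]| <= #|[set e | ((ends e).1 == x) && ((ends e).2 == x)]|.
  by apply: subset_leq_card; apply/subsetP => e; rewrite !inE => /eqP ->; rewrite h1 h2 eqxx.
rewrite cards1; case: #|_| => //.
Qed.

Lemma other_vertex (x : V) : cubic ends -> exists y, y != x.
Proof.
move=> Hc; case: (pickP (fun y => y != x)) => [y Hy|Hn]; first by exists y.
have H : forall y, y == x by move=> y; apply/negbFE; exact: Hn.
have := Hc x.
have -> : [set e | (ends e).2 == x] = [set e | (ends e).1 == x].
  by apply/setP => e; rewrite !inE !H.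
move=> Hh; have := congr1 odd Hh; rewrite oddD; by case: odd.
Qed.

Lemma strong_in_out o F (x : V) : strong_minus ends o F -> (exists y, y != x) ->
  (exists e, e \notin F /\ arc_head ends o e = x) /\ (exists e, e \notin F /\ arc_tail ends o e = x).
Proof.
move=> Hs [y Hy].
have Hxy := Hs; move/forallP/(_ x)/forallP/(_ y)/implyP: Hxy => /(_ (negbT (introF eqP (fun h => (negP Hy) (introT eqP (esym h)))))) Hxy.
move/forallP/(_ y)/forallP/(_ x)/implyP: Hs => /(_ Hy) Hyx.
split.
- case/connectP: Hyx => p; case/lastP: p => [/= _ Hx|q z].
    by move: Hy; rewrite Hx eqxx.
  rewrite rcons_path last_rcons => /andP [_ Ha] Hz.
  case/existsP: Ha => e /andP [/andP [eF _] /eqP he].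
  by exists e; split => //; rewrite he Hz.
- case/connectP: Hxy => p; case: p => [/= _ Hx|z q].
    by move: Hy; rewrite -Hx eqxx.
  rewrite /= => /andP [Ha _] _.
  case/existsP: Ha => e /andP [/andP [eF /eqP te] _].
  by exists e.
Qed.

Lemma head_inc o e x : arc_head ends o e = x -> incident ends e x.
Proof. by rewrite /arc_head /incident => <-; case: (o e); rewrite eqxx ?orbT. Qed.
Lemma tail_inc o e x : arc_tail ends o e = x -> incident ends e x.
Proof. by rewrite /arc_tail /incident => <-; case: (o e); rewrite eqxx ?orbT. Qed.
Lemma loop_of o e x : arc_head ends o e = x -> arc_tail ends o e = x ->
  (ends e).1 = x /\ (ends e).2 = x.
Proof. by rewrite /arc_head /arc_tail; case: (o e) => -> ->. Qed.
Lemma joins_cases o e a b : joins ends e a b ->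
  (arc_tail ends o e = a /\ arc_head ends o e = b) \/ (arc_tail ends o e = b /\ arc_head ends o e = a).
Proof. by case=> H; rewrite /arc_tail /arc_head H /=; case: (o e); auto. Qed.

End H.
Lemma mixed (V E : finType) (ends : E -> V * V) (o : orientation E) (v : V) e1 e2 :
  cubic ends -> strong_minus ends o [set e1] -> strong_minus ends o [set e2] ->
  arc_head ends o e1 = v -> arc_tail ends o e1 <> v ->
  arc_tail ends o e2 = v -> arc_head ends o e2 <> v -> False.
Proof.
move=> Hc S1 S2 h1 t1 t2 h2.
have Hy := other_vertex v Hc.
have [[a [aF ha]] _] := strong_in_out S1 Hy.
have [_ [d [dF td]]] := strong_in_out S2 Hy.
rewrite in_set1 in aF; rewrite in_set1 in dF.
have ae2 : a != e2 by apply/eqP => E2; apply: h2; rewrite -E2.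
have de1 : d != e1 by apply/eqP => E1; apply: t1; rewrite -E1.
have e12 : e1 != e2 by apply/eqP => E12; apply: h2; rewrite -E12.
case: (eqVneq a d) => [ad|ad].
- subst d; have [l1 l2] := loop_of ha td.
  apply: (deg_loop (a:=a) (b:=e1) (c:=e2) Hc _ l1 l2 (head_inc h1) (tail_inc t2)).
  by rewrite /= !inE negb_or aF ae2 e12.
- apply: (deg4 (a:=a) (b:=d) (c:=e1) (d:=e2) Hc _ (head_inc ha) (tail_inc td)
     (head_inc h1) (tail_inc t2)).
  by rewrite /= !inE !negb_or ad aF ae2 de1 dF e12.
Qed.

Theorem mainTheorem12 (V E : finType) (ends : E -> V * V)
  (o o' : orientation E) :
  cubic ends -> fn_is ends 2 ->
  (forall e : E, e \in Dset ends o \/ e \in Dset ends o') ->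
  (* 1 *)
  (forall v : V, (exists e, arc_head ends o' e = v) /\ (exists e, arc_tail ends o' e = v)) /\
  (* 2 *)
  (forall (e : E) (u v : V), joins ends e u v -> e \notin Dset ends o ->
     forall f g : E, f != e -> g != e -> f != g -> incident ends f u -> incident ends g u ->
       (arc_head ends o' f = u /\ arc_tail ends o' g = u) \/ (arc_tail ends o' f = u /\ arc_head ends o' g = u)) /\
  (* 3 *)
  (forall (e1 e2 : E) (u v w : V), joins ends e1 u v -> joins ends e2 v w -> u != w ->
     e1 \notin Dset ends o -> e2 \notin Dset ends o ->
       (arc_tail ends o' e1 = u /\ arc_head ends o' e1 = v /\ arc_tail ends o' e2 = w /\ arc_head ends o' e2 = v) \/
       (arc_tail ends o' e1 = v /\ arc_head ends o' e1 = u /\ arc_tail ends o' e2 = v /\ arc_head ends o' e2 = w)).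
Proof.
move=> Hc [_ [_ Hnot]] Hcov.
have HD : forall e, e \notin Dset ends o -> strong_minus ends o' [set e].
  move=> e He; case: (Hcov e) => H; first by rewrite H in He.
  by rewrite inE in H.
split; last split.
- move=> v.
  case: (pickP (fun e => e \in Dset ends o')) => [e0 He0|Hn]; last first.
    exfalso; apply: (Hnot 1) => //; exists (fun _ => o) => e; exists ord0.
    by case: (Hcov e) => // H; rewrite Hn in H.
  rewrite inE in He0.
  have [[a [_ ha]] [b [_ hb]]] := strong_in_out He0 (other_vertex v Hc).
  by split; [exists a | exists b].
- move=> e u v J He f g fe ge fg fi gi.
  have ei : incident ends e u.
    by case: J => H; rewrite /incident H eqxx ?orbT.
  have [[a [aF ha]] [b [bF tb]]] := strong_in_out (HD e He) (other_vertex u Hc).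
  rewrite in_set1 in aF; rewrite in_set1 in bF.
  have Hin : forall x, x != e -> incident ends x u -> (x == f) || (x == g).
    move=> x xe xi; apply/negPn/negP; rewrite negb_or => /andP [xf xg].
    apply: (deg4 (a:=x) (b:=e) (c:=f) (d:=g) Hc _ xi ei fi gi).
    by rewrite /= !inE !negb_or xe xf xg eq_sym fe eq_sym ge fg.
  have Hloop : forall x, (x == f) || (x == g) -> arc_head ends o' x = u -> arc_tail ends o' x = u -> False.
    move=> x /orP [] /eqP -> h t; have [l1 l2] := loop_of h t.
      apply: (deg_loop (a:=f) (b:=e) (c:=g) Hc _ l1 l2 ei gi).
      by rewrite /= !inE !negb_or fe fg eq_sym ge.
    apply: (deg_loop (a:=g) (b:=e) (c:=f) Hc _ l1 l2 ei fi).
    by rewrite /= !inE !negb_or ge eq_sym fg eq_sym fe.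
  have Ha := Hin a aF (head_inc ha); have Hb := Hin b bF (tail_inc tb).
  case/orP: (Ha) => /eqP Ea; case/orP: (Hb) => /eqP Eb.
  + by exfalso; apply: (Hloop a Ha ha); rewrite Ea -Eb.
  + by left; rewrite -Ea -Eb.
  + by right; rewrite -Ea -Eb.
  + by exfalso; apply: (Hloop a Ha ha); rewrite Ea -Eb.
- move=> e1 e2 u v w J1 J2 uw H1 H2.
  have S1 := HD _ H1; have S2 := HD _ H2.
  have [[t1 h1]|[t1 h1]] := joins_cases o' J1; have [[t2 h2]|[t2 h2]] := joins_cases o' J2.
  + case: (eqVneq u v) => [uv|uv]; first by subst; right; rewrite ?t1 ?h1 ?t2 ?h2.
    case: (eqVneq v w) => [vw|vw]; first by subst; left; rewrite ?t1 ?h1 ?t2 ?h2.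
    exfalso; apply: (mixed Hc S1 S2 h1 _ t2 _).
      by rewrite t1; apply/eqP.
    by rewrite h2; apply/eqP; rewrite eq_sym.
  + by left.
  + by right.
  + case: (eqVneq u v) => [uv|uv]; first by subst; left; rewrite ?t1 ?h1 ?t2 ?h2.
    case: (eqVneq v w) => [vw|vw]; first by subst; right; rewrite ?t1 ?h1 ?t2 ?h2.
    exfalso; apply: (mixed Hc S2 S1 h2 _ t1 _).
      by rewrite t2; apply/eqP; rewrite eq_sym.
    by rewrite h1; apply/eqP.
Qed.
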